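(* Consider the measurement scenario with observables $\mathcal{X} = \{x_1, x_2, x_3\}$, contexts $\mathcal{M} = \{\{x_1, x_2\}, \{x_2, x_3\}, \{x_1, x_3\}\}$ and outcomes $\mathcal{O} = \{0,1\}$. Up to relabelling, the only strongly contextual (possibilistic) empirical model on this scenario is the one in which perfect correlation is observed on two of the contexts and perfect anti-correlation is observed on the remaining context; i.e. (up to relabelling) the supports are $\{(0,0),(1,1)\}$ on $\{x_1,x_2\}$ and on $\{x_2,x_3\}$, and $\{(0,1),(1,0)\}$ on $\{x_3,x_1\}$ (listing outcomes of $x_3$ then $x_1$).
   Context: An empirical model on a measurement scenario $\langle \mathcal{X}, \mathcal{M}, \mathcal{O}\rangle$ is a compatible family $\{D_C\}_{C\in\mathcal{M}}$ of distributions $D_C$ on $\mathcal{O}^C$ (marginals on overlaps of contexts agree). Its possibilistic collapse replaces each $D_C$ by its support $S_C = \{s \in \mathcal{O}^C : D_C(s) > 0\}$ (possible joint outcomes); a possibilistic empirical model is such a compatible family of nonempty supports. A local section $s \in S_C$ extends to a global section if there is an assignment $g : \mathcal{X} \to \mathcal{O}$ with $g|_C = s$ and $g|_{C'} \in S_{C'}$ for every $C' \in \mathcal{M}$. The model is strongly contextual if no local section (in any context) extends to a global section, equivalently there is no assignment $g:\mathcal{X}\to\mathcal{O}$ with $g|_C \in S_C$ for all $C \in \mathcal{M}$. Perfect correlation on a context $\{x_i,x_j\}$ means the support is $\{(0,0),(1,1)\}$; perfect anti-correlation means the support is $\{(0,1),(1,0)\}$. Relabelling means permuting observables and permuting the outcomes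 of individual observables. *)

(* Defs.v *)
From mathcomp Require Import all_boot all_fingroup.
Set Implicit Arguments. Unset Strict Implicit. Unset Printing Implicit Defensive.

(* Observables x1,x2,x3 are the ordinals 0,1,2 of 'I_3; outcomes O = bool
   (false = 0, true = 1). *)
Definition obs := 'I_3.
Definition x1 : obs := @Ordinal 3 0 isT.
Definition x2 : obs := @Ordinal 3 1 isT.
Definition x3 : obs := @Ordinal 3 2 isT.

Definition assignment := {ffun obs -> bool}.

Definition contexts : {set {set obs}} :=
  [set [set x1; x2]; [set x2; x3]; [set x1; x3]].

(* A section s in O^C is encoded canonically as an assignment that is
   [false] outside C; [restr C g] is the restriction g|_C. *)
Definition restr (C : {set obs}) (g : assignment) : assignment :=
  [ffun x => (x \in C) && g x].

Definition section_on (C : {set obs}) (s : assignment) : bool :=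
  restr C s == s.

Definition pmodel := {set obs} -> {set assignment}.

Definition possibilistic_model (S : pmodel) : Prop :=
  [/\ forall C, C \in contexts -> S C != set0,
      forall C s, C \in contexts -> s \in S C -> section_on C s
    & forall C D, C \in contexts -> D \in contexts ->
        [set restr (C :&: D) s | s in S C] = [set restr (C :&: D) s | s in S D]].

Definition strongly_contextual (S : pmodel) : Prop :=
  ~ exists g : assignment, forall C, C \in contexts -> restr C g \in S C.

(* Relabelling: permute observables by sigma and permute the outcomes of
   each (original) observable x by the bool permutation  b |-> b (+) f x
   (the two permutations of {0,1} are id and negation). *)
Definition relabel (sigma : {perm obs}) (f : {ffun obs -> bool}) (S : pmodel)
  : pmodel :=
  fun C' => [set [ffun y => (y \in C') && (s ((sigma^-1)%g y) (+) f ((sigma^-1)%g y))]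
            | s : assignment in S (sigma @^-1: C')].

Definition target_rel (C : {set obs}) (g : assignment) : bool :=
  if C == [set x1; x2] then g x1 == g x2
  else if C == [set x2; x3] then g x2 == g x3
  else g x3 != g x1.

Definition target : pmodel :=
  fun C => [set restr C g | g in [pred g | target_rel C g]].

(* Main.v *)
Require Import Defs.
From mathcomp Require Import all_boot all_fingroup.
Set Implicit Arguments. Unset Strict Implicit. Unset Printing Implicit Defensive.

Notation C12 := [set x1; x2].
Notation C23 := [set x2; x3].
Notation C13 := [set x1; x3].

Lemma ctxE C : C \in contexts -> [\/ C = C12, C = C23 | C = C13].
Proof.
rewrite /contexts !inE => /orP [/orP [] |] /eqP ->;
  [by apply: Or31|by apply: Or32|by apply: Or33].
Qed.

Lemma ctx12 : C12 \in contexts. Proof. by rewrite !inE eqxx. Qed.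
Lemma ctx23 : C23 \in contexts. Proof. by rewrite !inE eqxx orbT. Qed.
Lemma ctx13 : C13 \in contexts. Proof. by rewrite !inE eqxx !orbT. Qed.

Lemma n12 : (x1 == x2) = false. Proof. by []. Qed.
Lemma n13 : (x1 == x3) = false. Proof. by []. Qed.
Lemma n21 : (x2 == x1) = false. Proof. by []. Qed.
Lemma n23 : (x2 == x3) = false. Proof. by []. Qed.
Lemma n31 : (x3 == x1) = false. Proof. by []. Qed.
Lemma n32 : (x3 == x2) = false. Proof. by []. Qed.
Definition neqs := (n12, n13, n21, n23, n31, n32).

Lemma s23 : (C23 == C12) = false.
Proof. apply/negbTE/eqP => /setP /(_ x3); rewrite !inE !neqs eqxx. by []. Qed.
Lemma s13a : (C13 == C12) = false.
Proof. apply/negbTE/eqP => /setP /(_ x3); rewrite !inE !neqs eqxx. by []. Qed.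
Lemma s13b : (C13 == C23) = false.
Proof. apply/negbTE/eqP => /setP /(_ x1); rewrite !inE !neqs eqxx. by []. Qed.
Definition sneqs := (s23, s13a, s13b).

Lemma obsP (x : obs) : [\/ x = x1, x = x2 | x = x3].
Proof.
case: x => [[|[|[|n]]] Hn]; [apply Or31|apply Or32|apply Or33|by []];
  exact: val_inj.
Qed.

Definition g3 (a b c : bool) : assignment :=
  [ffun x : obs => if x == x1 then a else if x == x2 then b else c].

Lemma g3E1 a b c : g3 a b c x1 = a. Proof. by rewrite ffunE. Qed.
Lemma g3E2 a b c : g3 a b c x2 = b. Proof. by rewrite ffunE. Qed.
Lemma g3E3 a b c : g3 a b c x3 = c. Proof. by rewrite ffunE. Qed.
Definition g3E := (g3E1, g3E2, g3E3).

Lemma restr_g3 (C : {set obs}) (g : assignment) a b c :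
  (x1 \in C -> g x1 = a) -> (x2 \in C -> g x2 = b) -> (x3 \in C -> g x3 = c) ->
  restr C g = restr C (g3 a b c).
Proof.
move=> H1 H2 H3; apply/ffunP => x; rewrite !ffunE.
case: (boolP (x \in C)) => //= Hx.
by case: (obsP x) Hx => -> Hx; rewrite ?g3E; auto.
Qed.

Lemma restr_at (C : {set obs}) (g h : assignment) x : restr C g = restr C h -> x \in C -> g x = h x.
Proof. by move=> /ffunP /(_ x); rewrite !ffunE => E Hx; move: E; rewrite Hx. Qed.

Definition allb (P : bool -> bool) := P false && P true.
Definition exb (P : bool -> bool) := P false || P true.
Lemma allbP (P : bool -> bool) : (forall a, P a) -> allb P.
Proof. by move=> H; rewrite /allb !H. Qed.
Lemma allbE (P : bool -> bool) : allb P -> forall a, P a.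
Proof. by case/andP => ? ? []. Qed.
Lemma exbP (P : bool -> bool) a : P a -> exb P.
Proof. by rewrite /exb; case: a => ->; rewrite ?orbT. Qed.

Lemma core (A B D : bool -> bool -> bool) :
  exb (fun a => exb (A a)) ==>
  allb (fun a => allb (fun b => A a b ==> exb (B b))) ==>
  allb (fun b => allb (fun c => B b c ==> exb (fun a => A a b))) ==>
  allb (fun b => allb (fun c => B b c ==> exb (fun a => D a c))) ==>
  allb (fun a => allb (fun c => D a c ==> exb (fun b => B b c))) ==>
  allb (fun a => allb (fun c => D a c ==> exb (A a))) ==>
  allb (fun a => allb (fun b => A a b ==> exb (D a))) ==>
  allb (fun a => allb (fun b => allb (fun c => ~~ [&& A a b, B b c & D a c]))) ==>
  exb (fun p => exb (fun q => exb (fun r => [&& p (+) q (+) r,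
        allb (fun a => allb (fun b => A a b == (b == a (+) p))),
        allb (fun b => allb (fun c => B b c == (c == b (+) q))) &
        allb (fun a => allb (fun c => D a c == (c == a (+) r)))]))).
Proof.
rewrite /allb /exb /=.
move: (A false false) (A false true) (A true false) (A true true)
      (B false false) (B false true) (B true false) (B true true)
      (D false false) (D false true) (D true false) (D true true).
by do 12!case.
Qed.

Lemma relabel_ok (S : pmodel) (f : {ffun obs -> bool}) (C : {set obs})
  (P : assignment -> bool) :
  (forall g, (restr C g \in S C) = P g) ->
  (forall g, P g = target_rel C [ffun y => g y (+) f y]) ->
  (forall s, s \in S C -> restr C s = s) ->
  relabel 1 f S C = target C.
Proof.
move=> HS HP Hsec.
have E1 : (1%g : {perm obs}) @^-1: C = C by apply/setP => y; rewrite inE perm1.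
rewrite /relabel /target E1 invg1.
apply/setP => h; apply/imsetP/imsetP.
- case=> s Hs ->; exists [ffun y => s y (+) f y].
    by rewrite inE -HP -HS Hsec.
  by apply/ffunP => y; rewrite !ffunE perm1.
- case=> g; rewrite inE => Hg ->; exists (restr C [ffun y => g y (+) f y]).
    rewrite HS HP.
    have -> : [ffun y => [ffun y => g y (+) f y] y (+) f y] = g.
      by apply/ffunP => y; rewrite !ffunE addbK.
    by [].
  apply/ffunP => y; rewrite !ffunE perm1; case: (y \in C) => //=.
  by rewrite addbK.
Qed.

Lemma target_mem (C : {set obs}) g :
  restr C g \in target C -> exists h, target_rel C h /\ forall x, x \in C -> g x = h x.
Proof.
case/imsetP => h; rewrite inE => Hh E; exists h; split => // x.
exact: restr_at E.
Qed.

Lemma target_in (C : {set obs}) g : target_rel C g -> restr C g \in target C.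
Proof. by move=> H; apply: imset_f; rewrite inE. Qed.

Lemma imset_eq (I : {set obs}) (A B : {set assignment}) :
  (forall s, s \in A -> exists2 t, t \in B & restr I s = restr I t) ->
  (forall t, t \in B -> exists2 s, s \in A & restr I s = restr I t) ->
  [set restr I s | s in A] = [set restr I s | s in B].
Proof.
move=> H1 H2; apply/setP => h; apply/imsetP/imsetP.
- by case=> s /H1 [t Ht E] ->; exists t.
- by case=> t /H2 [s Hs E] ->; exists s.
Qed.

Lemma obs_all (P : obs -> Prop) : P x1 -> P x2 -> P x3 -> forall x, P x.
Proof. by move=> ? ? ? x; case: (obsP x) => ->. Qed.

Ltac pw := apply/ffunP; apply: obs_all; rewrite !ffunE !inE ?eqxx ?neqs ?g3E //=.

Lemma target_compat C D : C \in contexts -> D \in contexts ->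
  forall s, s \in target C -> exists2 t, t \in target D &
     restr (C :&: D) s = restr (C :&: D) t.
Proof.
move=> /ctxE [] -> /ctxE [] -> s /imsetP [g]; rewrite inE /target_rel ?eqxx ?sneqs => Hg ->.
- by exists (restr C12 g) => //; apply: target_in; rewrite /target_rel ?eqxx ?sneqs.
- exists (restr C23 (g3 (g x2) (g x2) (g x2))).
    by apply: target_in; rewrite /target_rel ?eqxx ?sneqs ?g3E.
  pw.
- exists (restr C13 (g3 (g x1) (g x1) (~~ g x1))).
    by apply: target_in; rewrite /target_rel ?eqxx ?sneqs ?g3E; case: (g x1).
  pw.
- exists (restr C12 (g3 (g x2) (g x2) (g x2))).
    by apply: target_in; rewrite /target_rel ?eqxx ?sneqs ?g3E.
  pw.
- by exists (restr C23 g) => //; apply: target_in; rewrite /target_rel ?eqxx ?sneqs.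
- exists (restr C13 (g3 (~~ g x3) (g x3) (g x3))).
    by apply: target_in; rewrite /target_rel ?eqxx ?sneqs ?g3E; case: (g x3).
  pw.
- exists (restr C12 (g3 (g x1) (g x1) (g x1))).
    by apply: target_in; rewrite /target_rel ?eqxx ?sneqs ?g3E.
  pw.
- exists (restr C23 (g3 (g x3) (g x3) (g x3))).
    by apply: target_in; rewrite /target_rel ?eqxx ?sneqs ?g3E.
  pw.
- by exists (restr C13 g) => //; apply: target_in; rewrite /target_rel ?eqxx ?sneqs.
Qed.

Lemma exbE (P : bool -> bool) : exb P -> exists a, P a.
Proof. by case/orP => H; [exists false|exists true]. Qed.

Lemma restr12 g : restr C12 g = restr C12 (g3 (g x1) (g x2) false).
Proof. by apply: restr_g3 => //; rewrite !inE !neqs. Qed.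
Lemma restr23 g : restr C23 g = restr C23 (g3 false (g x2) (g x3)).
Proof. by apply: restr_g3 => //; rewrite !inE !neqs. Qed.
Lemma restr13 g : restr C13 g = restr C13 (g3 (g x1) false (g x3)).
Proof. by apply: restr_g3 => //; rewrite !inE !neqs. Qed.

Ltac memt := by rewrite !inE ?eqxx ?orbT.

Theorem mainTheorem2 :
  possibilistic_model target /\ strongly_contextual target /\
  (forall S : pmodel, possibilistic_model S -> strongly_contextual S ->
     exists (sigma : {perm obs}) (f : {ffun obs -> bool}),
       forall C, C \in contexts -> relabel sigma f S C = target C).
Proof.
split; [|split].
- split.
  + move=> C /ctxE [] ->; apply/set0Pn.
    * exists (restr C12 (g3 false false false)); apply: target_in.
      by rewrite /target_rel ?eqxx ?sneqs ?g3E.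
    * exists (restr C23 (g3 false false false)); apply: target_in.
      by rewrite /target_rel ?eqxx ?sneqs ?g3E.
    * exists (restr C13 (g3 false false true)); apply: target_in.
      by rewrite /target_rel ?eqxx ?sneqs ?g3E.
  + move=> C s _ /imsetP [g _ ->]; apply/eqP/ffunP => y; rewrite !ffunE.
    by case: (y \in C).
  + move=> C D HC HD; apply: imset_eq.
    * exact: target_compat.
    * move=> t Ht; have [s Hs E] := target_compat HD HC Ht.
      by exists s => //; rewrite setIC E.
- move=> [g Hg].
  have [h1 [H1 E1]] := target_mem (Hg _ ctx12).
  have [h2 [H2 E2]] := target_mem (Hg _ ctx23).
  have [h3 [H3 E3]] := target_mem (Hg _ ctx13).
  move: H1 H2 H3; rewrite /target_rel ?eqxx ?sneqs.
  rewrite -E1; [|memt]; rewrite -E1; [|memt].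
  rewrite -E2; [|memt]; rewrite -E2; [|memt].
  rewrite -E3; [|memt]; rewrite -E3; [|memt].
  by move=> /eqP -> /eqP ->; rewrite eqxx.
- move=> S [Hne Hsec Hcomp] sc.
  have secE C s : C \in contexts -> s \in S C -> restr C s = s.
    by move=> HC Hs; apply/eqP; exact: Hsec.
  have comp C D x s : C \in contexts -> D \in contexts -> x \in C -> x \in D ->
      s \in S C -> exists2 t, t \in S D & t x = s x.
    move=> HC HD xC xD Hs.
    have : restr (C :&: D) s \in [set restr (C :&: D) s | s in S C] by apply: imset_f.
    rewrite Hcomp // => /imsetP [t Ht E]; exists t => //.
    by have := congr1 (fun k : assignment => k x) E; rewrite !ffunE inE xC xD /= => ->.
  pose m12 := fun a b => restr C12 (g3 a b false) \in S C12.
  pose m23 := fun b c => restr C23 (g3 false b c) \in S C23.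
  pose m13 := fun a c => restr C13 (g3 a false c) \in S C13.
  have M12 s : s \in S C12 -> m12 (s x1) (s x2).
    by move=> Hs; rewrite /m12 -restr12 secE //; exact: ctx12.
  have M23 s : s \in S C23 -> m23 (s x2) (s x3).
    by move=> Hs; rewrite /m23 -restr23 secE //; exact: ctx23.
  have M13 s : s \in S C13 -> m13 (s x1) (s x3).
    by move=> Hs; rewrite /m13 -restr13 secE //; exact: ctx13.
  have h1 : exb (fun a => exb (m12 a)).
    have /set0Pn [s Hs] := Hne _ ctx12.
    apply: (@exbP _ (s x1)); apply: (@exbP _ (s x2)); exact: M12.
  have h2 : allb (fun a => allb (fun b => m12 a b ==> exb (m23 b))).
    apply/allbP => a; apply/allbP => b; apply/implyP => H; rewrite /m12 in H.
    have [t Ht Et] := comp _ _ x2 _ ctx12 ctx23 ltac:(memt) ltac:(memt) H.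
    apply: (@exbP _ (t x3)); have := M23 _ Ht.
    by rewrite Et ffunE g3E !inE eqxx orbT.
  have h3 : allb (fun b => allb (fun c => m23 b c ==> exb (fun a => m12 a b))).
    apply/allbP => b; apply/allbP => c; apply/implyP => H; rewrite /m23 in H.
    have [t Ht Et] := comp _ _ x2 _ ctx23 ctx12 ltac:(memt) ltac:(memt) H.
    apply: (@exbP _ (t x1)); have := M12 _ Ht.
    by rewrite Et ffunE g3E !inE eqxx.
  have h4 : allb (fun b => allb (fun c => m23 b c ==> exb (fun a => m13 a c))).
    apply/allbP => b; apply/allbP => c; apply/implyP => H; rewrite /m23 in H.
    have [t Ht Et] := comp _ _ x3 _ ctx23 ctx13 ltac:(memt) ltac:(memt) H.
    apply: (@exbP _ (t x1)); have := M13 _ Ht.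
    by rewrite Et ffunE g3E !inE eqxx orbT.
  have h5 : allb (fun a => allb (fun c => m13 a c ==> exb (fun b => m23 b c))).
    apply/allbP => a; apply/allbP => c; apply/implyP => H; rewrite /m13 in H.
    have [t Ht Et] := comp _ _ x3 _ ctx13 ctx23 ltac:(memt) ltac:(memt) H.
    apply: (@exbP _ (t x2)); have := M23 _ Ht.
    by rewrite Et ffunE g3E !inE eqxx orbT.
  have h6 : allb (fun a => allb (fun c => m13 a c ==> exb (m12 a))).
    apply/allbP => a; apply/allbP => c; apply/implyP => H; rewrite /m13 in H.
    have [t Ht Et] := comp _ _ x1 _ ctx13 ctx12 ltac:(memt) ltac:(memt) H.
    apply: (@exbP _ (t x2)); have := M12 _ Ht.
    by rewrite Et ffunE g3E !inE eqxx.
  have h7 : allb (fun a => allb (fun b => m12 a b ==> exb (m13 a))).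
    apply/allbP => a; apply/allbP => b; apply/implyP => H; rewrite /m12 in H.
    have [t Ht Et] := comp _ _ x1 _ ctx12 ctx13 ltac:(memt) ltac:(memt) H.
    apply: (@exbP _ (t x3)); have := M13 _ Ht.
    by rewrite Et ffunE g3E !inE eqxx.
  have h8 : allb (fun a => allb (fun b => allb (fun c =>
                ~~ [&& m12 a b, m23 b c & m13 a c]))).
    apply/allbP => a; apply/allbP => b; apply/allbP => c.
    apply/negP => /and3P [Ha Hb Hc]; apply: sc; exists (g3 a b c) => C /ctxE [] ->.
    * by rewrite restr12 !g3E.
    * by rewrite restr23 !g3E.
    * by rewrite restr13 !g3E.
  have := core m12 m23 m13.
  move=> /implyP /(_ h1) /implyP /(_ h2) /implyP /(_ h3) /implyP /(_ h4).
  move=> /implyP /(_ h5) /implyP /(_ h6) /implyP /(_ h7) /implyP /(_ h8).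
  move=> /exbE [p /exbE [q /exbE [r /and4P [Hpar HA HB HD]]]].
  have EA a b : m12 a b = (b == a (+) p) by apply/eqP; exact: (allbE (allbE HA a) b).
  have EB a b : m23 a b = (b == a (+) q) by apply/eqP; exact: (allbE (allbE HB a) b).
  have ED a b : m13 a b = (b == a (+) r) by apply/eqP; exact: (allbE (allbE HD a) b).
  exists 1%g, (g3 false p (p (+) q)).
  move=> C /ctxE [] ->.
  + apply: (relabel_ok (P := fun g => g x2 == g x1 (+) p)).
    * by move=> g; rewrite restr12; exact: EA.
    * move=> g; rewrite /target_rel ?eqxx ?sneqs !ffunE ?g3E ?eqxx ?neqs /=.
      by move: (g x1) (g x2) (p); do 3!case.
    * by move=> s Hs; exact: secE ctx12 Hs.
  + apply: (relabel_ok (P := fun g => g x3 == g x2 (+) q)).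
    * by move=> g; rewrite restr23; exact: EB.
    * move=> g; rewrite /target_rel ?eqxx ?sneqs !ffunE ?g3E ?eqxx ?neqs /=.
      by move: (g x2) (g x3) (p) (q); do 4!case.
    * by move=> s Hs; exact: secE ctx23 Hs.
  + apply: (relabel_ok (P := fun g => g x3 == g x1 (+) r)).
    * by move=> g; rewrite restr13; exact: ED.
    * move=> g; rewrite /target_rel ?eqxx ?sneqs !ffunE ?g3E ?eqxx ?neqs /=.
      by move: Hpar; move: (g x1) (g x3) (p) (q) (r); do 5!case.
    * by move=> s Hs; exact: secE ctx13 Hs.
Qed.
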